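(* Let $0\to V\to (W,I)\xrightarrow{\sigma}(T,j)\to0$ be a short exact sequence of finite-dimensional complex vector spaces (complex-linear maps) with $\dim_\mathbb{C}T=1$, and let $\Omega$ be an alternating real trilinear form on $W$ such that (i) $\Omega(v_1,v_2,v_3)=0$ for all $v_1,v_2,v_3\in V$; (ii) $\Omega(\xi,\cdot,\cdot)|_V$ is non-degenerate for all $\xi\in W$ with $\sigma(\xi)\neq0$; (iii) $\Omega(I\xi,v_1,v_2)=-\Omega(\xi,v_1,Iv_2)$ for all $\xi\in W$, $v_1,v_2\in V$. Then $\dim_\mathbb{R}V=4n$ for some $n$ and there is a real basis $\{e_1,e_2,a_1^k,a_2^k,b_1^k,b_2^k\}_{k=1}^n$ of $W$ such that $T=\mathrm{span}_\mathbb{R}\{\sigma(e_1),\sigma(e_2)\}$, $V=\mathrm{span}_\mathbb{R}\{a_1^k,a_2^k,b_1^k,b_2^k\}_{k=1}^n$, $Ie_1=e_2$, $Ia_1^k=a_2^k$, $Ib_1^k=-b_2^k$, and, with $\{\epsilon_1,\epsilon_2,\alpha_1^k,\alpha_2^k,\beta_1^k,\beta_2^k\}$ the dual basis, $$\Omega=\sum_{k=1}^n\Big((\beta_1^k\wedge\alpha_1^k+\beta_2^k\wedge\alpha_2^k)\wedge\epsilon_2-(\beta_1^k\wedge\alpha_2^k-\beta_2^k\wedge\alpha_1^k)\wedge\epsilon_1\Big)+\nu\wedge\epsilon_1\wedge\epsilon_2$$ for some linear 1-form $\nu$ vanishing on $e_1,e_2$. *)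

(* Defs.v *)
From HB Require Import structures.
From mathcomp Require Import all_boot all_order all_algebra.
From mathcomp Require Import reals.
Set Implicit Arguments. Unset Strict Implicit. Unset Printing Implicit Defensive.
Import Order.TTheory GRing.Theory Num.Theory.
Local Open Scope ring_scope.

(* Vectors of W = R^m are row vectors 'rV[R]_m; linear maps act on the
   right: v |-> v *m M. *)

Section Defs.
Variable R : realType.

Definition trilinear (m : nat) (Om : 'rV[R]_m -> 'rV[R]_m -> 'rV[R]_m -> R) :=
  [/\ forall (a : R) x x' y z, Om (a *: x + x') y z = a * Om x y z + Om x' y z,
      forall (a : R) x y y' z, Om x (a *: y + y') z = a * Om x y z + Om x y' z
    & forall (a : R) x y z z', Om x y (a *: z + z') = a * Om x y z + Om x y z'].

Definition alternating3 (m : nat) (Om : 'rV[R]_m -> 'rV[R]_m -> 'rV[R]_m -> R) :=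
  forall x y z, [/\ Om x x z = 0, Om x y x = 0 & Om x y y = 0].

Definition ev (m : nat) (f : 'cV[R]_m) (x : 'rV[R]_m) : R := (x *m f) 0 0.

(* wedge product f /\ g /\ h of three 1-forms (determinant convention:
   (f/\g/\h)(x,y,z) = det [f,g,h applied to x,y,z]) *)
Definition wedge3 (m : nat) (f g h : 'cV[R]_m) (x y z : 'rV[R]_m) : R :=
    ev f x * ev g y * ev h z - ev f x * ev g z * ev h y
  - ev f y * ev g x * ev h z + ev f y * ev g z * ev h x
  + ev f z * ev g x * ev h y - ev f z * ev g y * ev h x.
End Defs.

(* Labels of the basis {e1, e2, a1^k, a2^k, b1^k, b2^k}_{k<n} :
   inl false = e1, inl true = e2,
   inr (k, 0) = a1^k, inr (k, 1) = a2^k, inr (k, 2) = b1^k, inr (k, 3) = b2^k. *)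
Definition lbl (n : nat) := (bool + 'I_n * 'I_4)%type.
Definition lE1 {n} : lbl n := inl false.
Definition lE2 {n} : lbl n := inl true.
Definition lA1 {n} (k : 'I_n) : lbl n := inr (k, @Ordinal 4 0 isT).
Definition lA2 {n} (k : 'I_n) : lbl n := inr (k, @Ordinal 4 1 isT).
Definition lB1 {n} (k : 'I_n) : lbl n := inr (k, @Ordinal 4 2 isT).
Definition lB2 {n} (k : 'I_n) : lbl n := inr (k, @Ordinal 4 3 isT).

(* Main.v *)
Set Warnings "-notation-overridden,-ambiguous-paths,-parsing,-coercions".
Require Import Defs.
From HB Require Import structures.
From mathcomp Require Import all_boot all_order all_algebra.
From mathcomp Require Import reals.
From mathcomp Require Import ring lra.
From Stdlib Require Import Classical.
Set Implicit Arguments. Unset Strict Implicit. Unset Printing Implicit Defensive.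
Import Order.TTheory GRing.Theory Num.Theory.
Local Open Scope ring_scope.

Section Generic.
Variable R : realType.

Lemma evDZ k (f : 'cV[R]_k) a x y : ev f (a *: x + y) = a * ev f x + ev f y.
Proof. by rewrite /ev mulmxDl -scalemxAl !mxE. Qed.
Lemma ev0 k (f : 'cV[R]_k) : ev f 0 = 0.
Proof. by rewrite /ev mul0mx mxE. Qed.
Lemma evD k (f : 'cV[R]_k) x y : ev f (x + y) = ev f x + ev f y.
Proof. by have := evDZ f 1 x y; rewrite scale1r mul1r. Qed.
Lemma evZ k (f : 'cV[R]_k) a x : ev f (a *: x) = a * ev f x.
Proof. by have := evDZ f a x 0; rewrite addr0 ev0 addr0. Qed.
Lemma evN k (f : 'cV[R]_k) x : ev f (- x) = - ev f x.
Proof. by rewrite -scaleN1r evZ mulN1r. Qed.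
Lemma evB k (f : 'cV[R]_k) x y : ev f (x - y) = ev f x - ev f y.
Proof. by rewrite evD evN. Qed.
Lemma ev_fD k (f g : 'cV[R]_k) x : ev (f + g) x = ev f x + ev g x.
Proof. by rewrite /ev mulmxDr mxE. Qed.
Lemma ev_fZ k (f : 'cV[R]_k) a x : ev (a *: f) x = a * ev f x.
Proof. by rewrite /ev -scalemxAr mxE. Qed.
Lemma ev_fN k (f : 'cV[R]_k) x : ev (- f) x = - ev f x.
Proof. by rewrite /ev mulmxN mxE. Qed.
Lemma ev_fB k (f g : 'cV[R]_k) x : ev (f - g) x = ev f x - ev g x.
Proof. by rewrite ev_fD ev_fN. Qed.

Definition linf k (F : 'rV[R]_k -> R) := forall a x y, F (a *: x + y) = a * F x + F y.

Lemma linf0 k (F : 'rV[R]_k -> R) : linf F -> F 0 = 0.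
Proof.
by move=> HF; have := HF (-1) 0 0; rewrite scaler0 addr0 mulN1r addNr.
Qed.

Lemma linf_sum k (F : 'rV[R]_k -> R) I0 (r : seq I0) (P : pred I0) (c : I0 -> R) (g : I0 -> 'rV[R]_k) :
  linf F -> F (\sum_(i <- r | P i) c i *: g i) = \sum_(i <- r | P i) c i * F (g i).
Proof.
move=> HF; elim/big_rec2: _ => [|i y1 y2 _ <-]; first exact: linf0.
by rewrite HF.
Qed.

Definition colF k (F : 'rV[R]_k -> R) : 'cV[R]_k := \col_j F (delta_mx 0 j).

Lemma ev_colF k (F : 'rV[R]_k -> R) x : linf F -> ev (colF F) x = F x.
Proof.
move=> HF; rewrite {2}(row_sum_delta x) linf_sum // /ev mxE.
by apply: eq_bigr => i _; rewrite mxE.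
Qed.

Lemma mx11_eq0 (M : 'M[R]_1) : (M == 0) = (M 0 0 == 0).
Proof.
apply/eqP/eqP => [->|h]; first by rewrite mxE.
by apply/matrixP => i j; rewrite !ord1 h mxE.
Qed.

Lemma linf_ev k (f : 'cV[R]_k) : linf (ev f).
Proof. by move=> a x y; rewrite evDZ. Qed.

Lemma sum_delta n (c : 'I_n -> R) (i : 'I_n) : \sum_(j < n) c j * (j == i)%:R = c i.
Proof.
rewrite (bigD1 i) //= eqxx mulr1 big1 ?addr0 // => j /negbTE ->.
by rewrite mulr0.
Qed.

Lemma free_of_duals k (T : eqType) (x0 : T) (E : seq T) (vec : T -> 'rV[R]_k) (dual : T -> 'cV[R]_k) :
  uniq E -> (forall l l', l \in E -> l' \in E -> ev (dual l') (vec l) = (l == l')%:R) ->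
  free (map vec E).
Proof.
move=> uE Hd.
have -> : free (map vec E) = free (in_tuple (map vec E)) by [].
apply/freeP => c Hc i.
have hi : (i < size E)%N by rewrite -(size_map vec); exact: ltn_ord.
have := congr1 (ev (dual (nth x0 E i))) Hc.
rewrite ev0 linf_sum; last exact: linf_ev.
rewrite (eq_bigr (fun j => c j * (j == i)%:R)) ?sum_delta // => j _.
have hj : (j < size E)%N by rewrite -(size_map vec); exact: ltn_ord.
rewrite /= (nth_map x0) // Hd ?mem_nth // nth_uniq //.
Qed.

Lemma lin_span0 k (F : 'rV[R]_k -> R) (X : seq 'rV[R]_k) v :
  linf F -> (forall g, g \in X -> F g = 0) -> v \in <<X>>%VS -> F v = 0.
Proof.
move=> HF HX; rewrite -[X]/(tval (in_tuple X)) => /coord_span ->.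
rewrite linf_sum // big1 // => i _.
by rewrite HX ?mulr0 // mem_nth.
Qed.

Section Tri.
Variables (k : nat) (H : 'rV[R]_k -> 'rV[R]_k -> 'rV[R]_k -> R).
Hypotheses (Ht : trilinear H) (Ha : alternating3 H).

Lemma tD1 x x' y z : H (x + x') y z = H x y z + H x' y z.
Proof. by case: Ht => h _ _; have := h 1 x x' y z; rewrite scale1r mul1r. Qed.
Lemma tD2 x y y' z : H x (y + y') z = H x y z + H x y' z.
Proof. by case: Ht => _ h _; have := h 1 x y y' z; rewrite scale1r mul1r. Qed.
Lemma tD3 x y z z' : H x y (z + z') = H x y z + H x y z'.
Proof. by case: Ht => _ _ h; have := h 1 x y z z'; rewrite scale1r mul1r. Qed.

Lemma sk12 x y z : H x y z = - H y x z.
Proof.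
have := (Ha (x + y) (x + y) z); case => h _ _.
move: h; rewrite tD1 !tD2.
case: (Ha x y z) => -> _ _; case: (Ha y x z) => -> _ _.
by rewrite add0r addr0 => /eqP; rewrite addr_eq0 => /eqP.
Qed.
Lemma sk23 x y z : H x y z = - H x z y.
Proof.
have := (Ha x (y + z) (y + z)); case => _ _ h.
move: h; rewrite tD2 !tD3.
case: (Ha x y y) => _ _ ->; case: (Ha x z z) => _ _ ->.
by rewrite add0r addr0 => /eqP; rewrite addr_eq0 => /eqP.
Qed.
Lemma sk13 x y z : H x y z = - H z y x.
Proof. by rewrite sk12 sk23 sk12 opprK. Qed.

Variables (e1 e2 : 'rV[R]_k) (V : {vspace 'rV[R]_k}).
Hypothesis Hdec : forall x, exists c1 c2 v, v \in V /\ x = c1 *: e1 + c2 *: e2 + v.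
Hypothesis H0 : forall u v w, u \in V -> v \in V -> w \in V -> H u v w = 0.
Hypothesis H1 : forall v w, v \in V -> w \in V -> H e1 v w = 0.
Hypothesis H2 : forall v w, v \in V -> w \in V -> H e2 v w = 0.
Hypothesis H3 : forall v, v \in V -> H e1 e2 v = 0.

Definition inS a := [\/ a = e1, a = e2 | a \in V].

Lemma tri_zero_S a b c : inS a -> inS b -> inS c -> H a b c = 0.
Proof.
have Aa x y : H x x y = 0 by case: (Ha x x y).
have Ab x y : H x y x = 0 by case: (Ha x y x).
have Ac x y : H y x x = 0 by case: (Ha y x x).
case=> [->|->|ha]; case=> [->|->|hb]; case=> [->|->|hc] //;
  do ?[ by rewrite H0 ?oppr0 | by rewrite H1 ?oppr0 | by rewrite H2 ?oppr0 | by rewrite H3 ?oppr0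
      | by rewrite sk12 H1 ?oppr0 | by rewrite sk12 H2 ?oppr0 | by rewrite sk12 H3 ?oppr0
      | by rewrite sk13 H1 ?oppr0 | by rewrite sk13 H2 ?oppr0 | by rewrite sk13 H3 ?oppr0
      | by rewrite sk23 H1 ?oppr0 | by rewrite sk23 H2 ?oppr0 | by rewrite sk23 H3 ?oppr0
      | by rewrite sk12 sk23 H3 ?oppr0 | by rewrite sk12 sk13 H3 ?oppr0
      | by rewrite sk13 sk23 H3 ?oppr0 | by rewrite sk23 sk12 H3 ?oppr0
      | by rewrite sk23 sk13 H3 ?oppr0 | by rewrite sk13 sk12 H3 ?oppr0 ].
Qed.

Lemma tri_zero x y z : H x y z = 0.
Proof.
have dec P (hP : forall a, inS a -> P a = 0) (lin : forall a x' y', P (a *: x' + y') = a * P x' + P y') w : P w = 0.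
  case: (Hdec w) => c1 [c2 [v [hv ->]]].
  rewrite -addrA !lin !hP ?mulr0 ?add0r //; by constructor.
case: Ht => t1 t2 t3.
apply: (dec (fun a => H a y z)) => // a ha.
apply: (dec (fun b => H a b z)) => // b hb.
apply: (dec (fun c => H a b c)) => // c hc.
exact: tri_zero_S.
Qed.
End Tri.

Lemma tri_sub k (F G : 'rV[R]_k -> 'rV[R]_k -> 'rV[R]_k -> R) :
  trilinear F -> trilinear G -> trilinear (fun x y z => F x y z - G x y z).
Proof.
case=> f1 f2 f3 [g1 g2 g3]; split=> *;
  by rewrite ?f1 ?g1 ?f2 ?g2 ?f3 ?g3 mulrBr opprD addrACA.
Qed.

Lemma alt_sub k (F G : 'rV[R]_k -> 'rV[R]_k -> 'rV[R]_k -> R) :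
  alternating3 F -> alternating3 G -> alternating3 (fun x y z => F x y z - G x y z).
Proof.
move=> hf hg x y z; case: (hf x y z) => f1 f2 f3; case: (hg x y z) => g1 g2 g3.
by rewrite f1 f2 f3 g1 g2 g3 subrr.
Qed.

Lemma tri_add k (F G : 'rV[R]_k -> 'rV[R]_k -> 'rV[R]_k -> R) :
  trilinear F -> trilinear G -> trilinear (fun x y z => F x y z + G x y z).
Proof.
case=> f1 f2 f3 [g1 g2 g3]; split=> *;
  by rewrite ?f1 ?g1 ?f2 ?g2 ?f3 ?g3 mulrDr addrACA.
Qed.

Lemma alt_add k (F G : 'rV[R]_k -> 'rV[R]_k -> 'rV[R]_k -> R) :
  alternating3 F -> alternating3 G -> alternating3 (fun x y z => F x y z + G x y z).
Proof.
move=> hf hg x y z; case: (hf x y z) => f1 f2 f3; case: (hg x y z) => g1 g2 g3.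
by rewrite f1 f2 f3 g1 g2 g3 addr0.
Qed.

Lemma tri_sum k n (F : 'I_n -> 'rV[R]_k -> 'rV[R]_k -> 'rV[R]_k -> R) :
  (forall i, trilinear (F i)) -> trilinear (fun x y z => \sum_(i < n) F i x y z).
Proof.
move=> hF; split=> *; rewrite mulr_sumr -big_split /=; apply: eq_bigr => i _;
  by case: (hF i) => f1 f2 f3; rewrite ?f1 ?f2 ?f3.
Qed.

Lemma alt_sum k n (F : 'I_n -> 'rV[R]_k -> 'rV[R]_k -> 'rV[R]_k -> R) :
  (forall i, alternating3 (F i)) -> alternating3 (fun x y z => \sum_(i < n) F i x y z).
Proof.
move=> hF x y z; split; apply: big1 => i _; by case: (hF i x y z).
Qed.

Lemma tri_wedge3 k (f g h : 'cV[R]_k) : trilinear (wedge3 f g h).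
Proof. split=> *; rewrite /wedge3 !evDZ; ring. Qed.

Lemma alt_wedge3 k (f g h : 'cV[R]_k) : alternating3 (wedge3 f g h).
Proof. move=> x y z; split; rewrite /wedge3; ring. Qed.
End Generic.

Definition c1 {R : realType} (t t' : 'I_4) : R :=
  match val t, val t' with
  | 3%N, 0%N => 1 | 0%N, 3%N => -1 | 1%N, 2%N => 1 | 2%N, 1%N => -1 | _, _ => 0 end.

Section Darboux.
Variables (R : realType) (m : nat) (I : 'M[R]_m) (w : 'rV[R]_m -> 'rV[R]_m -> R)
  (U0 : {vspace 'rV[R]_m}).
Hypotheses (HI : I *m I = - (1%:M : 'M[R]_m))
  (wl : forall a x x' y, w (a *: x + x') y = a * w x y + w x' y)
  (wr : forall a x y y', w x (a *: y + y') = a * w x y + w x y')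
  (walt : forall x, w x x = 0)
  (wI : forall u v, u \in U0 -> v \in U0 -> w (u *m I) v = w u (v *m I))
  (U0I : forall u, u \in U0 -> u *m I \in U0).

Lemma mII (u : 'rV[R]_m) : u *m I *m I = - u.
Proof. by rewrite -mulmxA HI mulmxN mulmx1. Qed.

Lemma w0l y : w 0 y = 0.
Proof. by have := wl (-1) 0 0 y; rewrite scaler0 addr0 mulN1r addNr. Qed.
Lemma w0r x : w x 0 = 0.
Proof. by have := wr (-1) x 0 0; rewrite scaler0 addr0 mulN1r addNr. Qed.
Lemma wDl x x' y : w (x + x') y = w x y + w x' y.
Proof. by have := wl 1 x x' y; rewrite scale1r mul1r. Qed.
Lemma wDr x y y' : w x (y + y') = w x y + w x y'.
Proof. by have := wr 1 x y y'; rewrite scale1r mul1r. Qed.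
Lemma wZl a x y : w (a *: x) y = a * w x y.
Proof. by have := wl a x 0 y; rewrite addr0 w0l addr0. Qed.
Lemma wZr a x y : w x (a *: y) = a * w x y.
Proof. by have := wr a x y 0; rewrite addr0 w0r addr0. Qed.
Lemma wNl x y : w (- x) y = - w x y.
Proof. by rewrite -scaleN1r wZl mulN1r. Qed.
Lemma wNr x y : w x (- y) = - w x y.
Proof. by rewrite -scaleN1r wZr mulN1r. Qed.
Lemma wBl x x' y : w (x - x') y = w x y - w x' y.
Proof. by rewrite wDl wNl. Qed.
Lemma wBr x y y' : w x (y - y') = w x y - w x y'.
Proof. by rewrite wDr wNr. Qed.
Lemma wsk x y : w x y = - w y x.
Proof.
have := walt (x + y); rewrite wDl !wDr !walt add0r addr0 => /eqP.
by rewrite addr_eq0 => /eqP.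
Qed.
Lemma wuuI u : u \in U0 -> w u (u *m I) = 0.
Proof.
move=> hu; have h1 := wI hu hu; rewrite wsk in h1.
move/eqP: h1; rewrite eq_sym -subr_eq0 opprK -mulr2n mulrn_eq0 /=.
by move/eqP.
Qed.
Lemma wII u v : u \in U0 -> v \in U0 -> w (u *m I) (v *m I) = - w u v.
Proof. by move=> hu hv; rewrite wI ?U0I // mII wNr. Qed.

Lemma linf_w x : linf (w x).
Proof. by move=> a y y'; rewrite wr. Qed.

Definition colw x := colF (w x).
Definition Kw x : {vspace 'rV[R]_m} := lker (linfun (mulmxr (colw x))).
Lemma memKw x u : (u \in Kw x) = (w x u == 0).
Proof.
by rewrite memv_ker lfunE /= mx11_eq0 -[(u *m colw x) 0 0]/(ev (colw x) u) ev_colF // linf_w.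
Qed.

Definition blk (p : 'rV[R]_m * 'rV[R]_m) (t : 'I_4) : 'rV[R]_m :=
  match val t with 0%N => p.1 | 1%N => p.1 *m I | 2%N => p.2 | _ => - (p.2 *m I) end.
Definition bl (s : seq ('rV[R]_m * 'rV[R]_m)) :=
  flatten [seq [:: p.1; p.1 *m I; p.2; - (p.2 *m I)] | p <- s].

Lemma table a b : a \in U0 -> b \in U0 -> w a b = 0 -> w (a *m I) b = 1 ->
  forall t t', w (blk (a, b) t) (blk (a, b) t') = c1 t t'.
Proof.
move=> ha hb h0 h1.
have f1 : w a (a *m I) = 0 by rewrite wuuI.
have f2 : w (a *m I) a = 0 by rewrite wsk f1 oppr0.
have f4 : w b a = 0 by rewrite wsk h0 oppr0.
have f6 : w b (a *m I) = -1 by rewrite wsk h1.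
have f7 : w a (b *m I) = 1 by rewrite -wI.
have f8 : w (b *m I) a = -1 by rewrite wsk f7.
have f9 : w (a *m I) (b *m I) = 0 by rewrite wII // h0 oppr0.
have f10 : w (b *m I) (a *m I) = 0 by rewrite wsk f9 oppr0.
have f11 : w b (b *m I) = 0 by rewrite wuuI.
have f12 : w (b *m I) b = 0 by rewrite wsk f11 oppr0.
case=> [[|[|[|[|t]]]] ht] [[|[|[|[|t']]]] ht'] //;
  rewrite /blk /c1 /= ?wNl ?wNr ?walt ?opprK ?oppr0 //;
  rewrite ?f1 ?f2 ?f4 ?f6 ?f7 ?f8 ?f9 ?f10 ?f11 ?f12 ?h0 ?h1 ?oppr0 ?opprK //.
Qed.

Lemma darboux (d : nat) (U : {vspace 'rV[R]_m}) : (\dim U < d)%N -> (U <= U0)%VS ->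
  (forall u, u \in U -> u *m I \in U) ->
  (forall u, u \in U -> (forall v, v \in U -> w u v = 0) -> u = 0) ->
  exists s : seq ('rV[R]_m * 'rV[R]_m),
  [/\ forall i t, (i < size s)%N -> blk (nth (0, 0) s i) t \in U,
      (U <= <<bl s>>)%VS &
      forall i j t t', (i < size s)%N -> (j < size s)%N ->
        w (blk (nth (0, 0) s i) t) (blk (nth (0, 0) s j) t') = (i == j)%:R * c1 t t'].
Proof.
elim: d U => [//|d IH] U hdim hU hI hnd.
have subU0 : forall u, u \in U -> u \in U0 by apply/subvP.
case U0eq: (U == 0%VS).
  exists [::]; split => //; by rewrite (eqP U0eq) sub0v.
set a := vpick U.
have ha : a \in U by exact: memv_pick.
have anz : a != 0 by rewrite vpick0 U0eq.
have [v [hv hav]] : exists v, v \in U /\ w a v != 0.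
  case: (classic (exists v, v \in U /\ w a v != 0)) => // hne; exfalso.
  move/eqP: anz; apply; apply: hnd => // v hv; apply/eqP/negPn/negP => hne'.
  by apply: hne; exists v.
set al := w a v; set be := w a (v *m I).
set D := al ^+ 2 + be ^+ 2.
have Dnz : D != 0.
  rewrite /D; apply/negP => /eqP h; move/negP: hav; apply.
  move/eqP: h; rewrite paddr_eq0 ?sqr_ge0 // => /andP [h2 _].
  by move: h2; rewrite sqrf_eq0.
set b := (be / D) *: v - (al / D) *: (v *m I).
have hb : b \in U by rewrite rpredB // rpredZ // hI.
have ha0 := subU0 _ ha; have hb0 := subU0 _ hb; have hv0 := subU0 _ hv.
have h0 : w a b = 0.
  by rewrite /b wBr !wZr -/al -/be; ring.
have h1 : w (a *m I) b = 1.
  rewrite /b wBr !wZr wI // wII ?U0I // -/al -/be.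
  by move: Dnz; rewrite /D => Dnz; field.
clearbody b.
have tab := table ha0 hb0 h0 h1.
have e00 := tab (@Ordinal 4 0 isT) (@Ordinal 4 0 isT); rewrite /blk /c1 /= in e00.
have e01 := tab (@Ordinal 4 0 isT) (@Ordinal 4 1 isT); rewrite /blk /c1 /= in e01.
have e02 := tab (@Ordinal 4 0 isT) (@Ordinal 4 2 isT); rewrite /blk /c1 /= in e02.
have e03 := tab (@Ordinal 4 0 isT) (@Ordinal 4 3 isT); rewrite /blk /c1 /= in e03.
have e10 := tab (@Ordinal 4 1 isT) (@Ordinal 4 0 isT); rewrite /blk /c1 /= in e10.
have e11 := tab (@Ordinal 4 1 isT) (@Ordinal 4 1 isT); rewrite /blk /c1 /= in e11.
have e12 := tab (@Ordinal 4 1 isT) (@Ordinal 4 2 isT); rewrite /blk /c1 /= in e12.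
have e13 := tab (@Ordinal 4 1 isT) (@Ordinal 4 3 isT); rewrite /blk /c1 /= in e13.
have e20 := tab (@Ordinal 4 2 isT) (@Ordinal 4 0 isT); rewrite /blk /c1 /= in e20.
have e21 := tab (@Ordinal 4 2 isT) (@Ordinal 4 1 isT); rewrite /blk /c1 /= in e21.
have e22 := tab (@Ordinal 4 2 isT) (@Ordinal 4 2 isT); rewrite /blk /c1 /= in e22.
have e23 := tab (@Ordinal 4 2 isT) (@Ordinal 4 3 isT); rewrite /blk /c1 /= in e23.
have e30 := tab (@Ordinal 4 3 isT) (@Ordinal 4 0 isT); rewrite /blk /c1 /= in e30.
have e31 := tab (@Ordinal 4 3 isT) (@Ordinal 4 1 isT); rewrite /blk /c1 /= in e31.
have e32 := tab (@Ordinal 4 3 isT) (@Ordinal 4 2 isT); rewrite /blk /c1 /= in e32.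
have e33 := tab (@Ordinal 4 3 isT) (@Ordinal 4 3 isT); rewrite /blk /c1 /= in e33.
set U' := (U :&: Kw a :&: Kw (a *m I) :&: Kw b :&: Kw (- (b *m I)))%VS.
have memU' u : (u \in U') = [&& u \in U, w a u == 0, w (a *m I) u == 0, w b u == 0 &
    w (- (b *m I)) u == 0].
  by rewrite !memv_cap !memKw -!andbA.
set pi := fun u => u - (w (- (b *m I)) u *: a - w b u *: (a *m I) + w (a *m I) u *: b
   - w a u *: (- (b *m I))).
have hbI : - (b *m I) \in U by rewrite memvN hI.
have haI : a *m I \in U by rewrite hI.
have combo_in : forall u, (w (- (b *m I)) u *: a - w b u *: (a *m I) + w (a *m I) u *: b
   - w a u *: (- (b *m I))) \in U.
  move=> u; rewrite !(rpredB, rpredD, rpredZ) //;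
    first [exact: ha | exact: haI | exact: hv | exact: hbI | exact: (hI _ hv) | exact: hb].
have hpi u : u \in U -> pi u \in U'.
  move=> hu; rewrite memU' rpredB ?combo_in //=.
  rewrite !(wBr, wDr, wZr) ?e00 ?e01 ?e02 ?e03 ?e10 ?e11 ?e12 ?e13 ?e20 ?e21 ?e22 ?e23 ?e30 ?e31 ?e32 ?e33 ?walt.
  apply/and4P; split; apply/eqP; ring.
have U'U : (U' <= U)%VS by apply/subvP => u; rewrite memU' => /andP [].
have U'I u : u \in U' -> u *m I \in U'.
  rewrite !memU' => /and5P [hu /eqP z1 /eqP z2 /eqP z3 /eqP z4].
  have hu0 := subU0 _ hu.
  rewrite hI //= -wI // z2 wII // z1 oppr0 eqxx /=.
  have z4' : w (b *m I) u = 0 by move: z4; rewrite wNl => /eqP; rewrite oppr_eq0 => /eqP.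
  by rewrite -wI // z4' eqxx /= wNl wII // opprK z3.
have U'nd u : u \in U' -> (forall v, v \in U' -> w u v = 0) -> u = 0.
  move=> hu hor; apply: hnd; first by move/subvP: U'U; apply.
  move=> z hz; have := hor _ (hpi _ hz).
  move: hu; rewrite memU' => /and5P [_ /eqP z1 /eqP z2 /eqP z3 /eqP z4].
  have z4' : w (b *m I) u = 0 by move: z4; rewrite wNl => /eqP; rewrite oppr_eq0 => /eqP.
  rewrite /pi !(wBr, wDr, wZr, wNr) (wsk u a) (wsk u (a *m I)) (wsk u b) (wsk u (b *m I)).
  by rewrite z1 z2 z3 z4' !oppr0 !mulr0 !oppr0 !addr0 subr0.
have aU' : a \notin U' by rewrite memU' e30 oner_eq0 !andbF.
have dimlt : (\dim U' < \dim U)%N.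
  rewrite (ltn_leqif (dimv_leqif_eq U'U)); apply/eqP => eU; move: aU'; by rewrite eU ha.
have [s' [s1 s2 s3]] := IH U' (leq_trans dimlt hdim) (subv_trans U'U hU) U'I U'nd.
exists ((a, b) :: s'); split.
- case=> [|i] t /=.
    by case: t => [[|[|[|[|t]]]] ht]; rewrite /blk /=.
  by move=> hi; move/subvP: U'U; apply; apply: s1.
- have -> : bl ((a, b) :: s') = [:: a; a *m I; b; - (b *m I)] ++ bl s' by [].
  rewrite span_cat; apply/subvP => u hu.
  rewrite -[u](subrK (w (- (b *m I)) u *: a - w b u *: (a *m I) + w (a *m I) u *: b
   - w a u *: (- (b *m I)))) addrC.
  apply: memv_add; last by move/subvP: s2; apply; apply: hpi.
  by rewrite !(rpredB, rpredD, rpredZ) ?memv_span ?inE ?eqxx ?orbT.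
- have orth z t : z \in U' -> w (blk (a, b) t) z = 0.
    rewrite memU' => /and5P [_ /eqP z1 /eqP z2 /eqP z3 /eqP z4].
    by case: t => [[|[|[|[|t]]]] ht]; rewrite /blk /=.
  case=> [|i] [|j] t t' /= hi hj.
  + by rewrite mul1r tab.
  + by rewrite mul0r orth // s1.
  + by rewrite mul0r wsk orth ?oppr0 // s1.
  + by rewrite eqSS s3.
Qed.

End Darboux.

Definition c2 {R : realType} (t t' : 'I_4) : R :=
  match val t, val t' with
  | 2%N, 0%N => 1 | 0%N, 2%N => -1 | 3%N, 1%N => 1 | 1%N, 3%N => -1 | _, _ => 0 end.

Definition pd (t : 'I_4) : 'I_4 :=
  match val t with 0%N => @Ordinal 4 3 isT | 1%N => @Ordinal 4 2 isT
  | 2%N => @Ordinal 4 1 isT | _ => @Ordinal 4 0 isT end.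
Definition sg {R : realType} (t : 'I_4) : R :=
  match val t with 0%N => 1 | 1%N => -1 | 2%N => 1 | _ => -1 end.

Lemma ev_col (R : realType) m n (A : 'M[R]_(m, n)) i x : ev (col i A) x = (x *m A) 0 i.
Proof. by rewrite /ev !mxE; apply: eq_bigr => k _; rewrite mxE. Qed.

Theorem mainTheorem5 (R : realType) (m : nat)
  (I : 'M[R]_m) (j : 'M[R]_2) (sigma : 'M[R]_(m, 2))
  (Om : 'rV[R]_m -> 'rV[R]_m -> 'rV[R]_m -> R) :
  I *m I = - 1%:M ->
  j *m j = - 1%:M ->
  I *m sigma = sigma *m j ->
  row_full sigma ->
  trilinear Om -> alternating3 Om ->
  (forall v1 v2 v3 : 'rV[R]_m, v1 *m sigma = 0 -> v2 *m sigma = 0 ->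
     v3 *m sigma = 0 -> Om v1 v2 v3 = 0) ->
  (forall xi : 'rV[R]_m, xi *m sigma != 0 ->
     forall v1 : 'rV[R]_m, v1 *m sigma = 0 ->
       (forall v2 : 'rV[R]_m, v2 *m sigma = 0 -> Om xi v1 v2 = 0) -> v1 = 0) ->
  (forall xi v1 v2 : 'rV[R]_m, v1 *m sigma = 0 -> v2 *m sigma = 0 ->
     Om (xi *m I) v1 v2 = - Om xi v1 (v2 *m I)) ->
  exists n : nat,
    \rank (kermx sigma) = (4 * n)%N /\
    exists (vec : lbl n -> 'rV[R]_m) (dual : lbl n -> 'cV[R]_m) (nu : 'cV[R]_m),
      [/\ basis_of fullv [seq vec l | l : lbl n],
          (forall l l' : lbl n, ev (dual l') (vec l) = (l == l')%:R),
          basis_of fullv [:: vec lE1 *m sigma; vec lE2 *m sigma] &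
          (forall x : 'rV[R]_m,
             (x \in <<[seq vec (inr p) | p : 'I_n * 'I_4]>>%VS) = (x *m sigma == 0))] /\
      [/\ vec lE1 *m I = vec lE2,
          (forall k, vec (lA1 k) *m I = vec (lA2 k)),
          (forall k, vec (lB1 k) *m I = - vec (lB2 k)),
          ev nu (vec lE1) = 0 /\ ev nu (vec lE2) = 0 &
          (forall x y z : 'rV[R]_m,
             Om x y z =
               \sum_(k < n)
                  (  wedge3 (dual (lB1 k)) (dual (lA1 k)) (dual lE2) x y z
                   + wedge3 (dual (lB2 k)) (dual (lA2 k)) (dual lE2) x y z
                   - (  wedge3 (dual (lB1 k)) (dual (lA2 k)) (dual lE1) x y z
                      - wedge3 (dual (lB2 k)) (dual (lA1 k)) (dual lE1) x y z))
               + wedge3 nu (dual lE1) (dual lE2) x y z)].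
Proof.
move=> HI HJ HIs Hfull Htri Halt Hi Hii Hiii.
have Htri0 := Htri; case: Htri0 => t1 t2 t3.
have [B HB] := row_fullP Hfull.
set e1 := row 0 B.
have he1 : e1 *m sigma = row 0 1%:M by rewrite -row_mul HB.
set e2 := e1 *m I.
have he2 : e2 *m sigma = row 0 j by rewrite -mulmxA HIs mulmxA he1 -row_mul mul1mx.
set p := j 0 0; set q := j 0 1.
have qnz : q != 0.
  apply/negP => /eqP q0.
  have := congr1 (fun M : 'M[R]_2 => M 0 0) HJ; rewrite /= !mxE big_ord_recr big_ord1 /=.
  have -> : widen_ord (leqnSn 1) ord0 = 0 :> 'I_2 by apply/val_inj.
  have -> : ord_max = 1 :> 'I_2 by apply/val_inj.
  rewrite -/p -/q q0.
  move=> h; have : p * p + 0 * j 1 0 = -1 by rewrite h.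
  rewrite mul0r addr0 => h2; have := sqr_ge0 p; rewrite expr2 h2; lra.
set eps1 : 'cV[R]_m := col 0 sigma - (p / q) *: col 1 sigma.
set eps2 : 'cV[R]_m := q^-1 *: col 1 sigma.
have eps1E x : ev eps1 x = (x *m sigma) 0 0 - p / q * (x *m sigma) 0 1.
  by rewrite /eps1 ev_fB ev_fZ !ev_col.
have eps2E x : ev eps2 x = q^-1 * (x *m sigma) 0 1.
  by rewrite /eps2 ev_fZ !ev_col.
set U0 : {vspace 'rV[R]_m} := lker (linfun (mulmxr sigma)).
have memU0 x : (x \in U0) = (x *m sigma == 0) by rewrite memv_ker lfunE.
have eps1U x : x \in U0 -> ev eps1 x = 0.
  by rewrite memU0 eps1E => /eqP ->; rewrite !mxE mulr0 subr0.
have eps2U x : x \in U0 -> ev eps2 x = 0.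
  by rewrite memU0 eps2E => /eqP ->; rewrite !mxE mulr0.
have e11 : ev eps1 e1 = 1 by rewrite eps1E he1 !mxE /= mulr0 subr0.
have e21 : ev eps2 e1 = 0 by rewrite eps2E he1 !mxE /= mulr0.
have e12 : ev eps1 e2 = 0 by rewrite eps1E he2 !mxE -/p -/q divfK // subrr.
have e22 : ev eps2 e2 = 1 by rewrite eps2E he2 !mxE -/q mulVf.
set P := fun x => x - (ev eps1 x *: e1 + ev eps2 x *: e2).
have linP a x y : P (a *: x + y) = a *: P x + P y.
  by rewrite /P !evDZ; apply/matrixP => i k; rewrite !mxE; ring.
have linPf : forall F : 'rV[R]_m -> R, linf F -> linf (fun x => F (P x)).
  by move=> F hF a x y; rewrite linP hF.
have PU0 x : P x \in U0.
  rewrite memU0; apply/eqP/matrixP => i k.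
  rewrite /P mulmxBl mulmxDl -!scalemxAl he1 he2 -/e2 eps1E eps2E.
  set y := x *m sigma.
  rewrite ord1 !mxE; case: k => [[|[|k]] hk] //=.
  - have -> : Ordinal hk = 0 :> 'I_2 by apply/val_inj.
    rewrite -/p /=; field; exact: qnz.
  - have -> : Ordinal hk = 1 :> 'I_2 by apply/val_inj.
    rewrite -/q /=; field; exact: qnz.
have PU0id x : x \in U0 -> P x = x.
  by move=> hx; rewrite /P eps1U // eps2U // !scale0r addr0 subr0.
have Pe1 : P e1 = 0 by rewrite /P e11 e21 scale1r scale0r addr0 subrr.
have Pe2 : P e2 = 0 by rewrite /P e12 e22 scale1r scale0r add0r subrr.
have U0E x : x \in U0 -> x *m sigma = 0 by rewrite memU0 => /eqP.
have wl a x x' y : Om e1 (a *: x + x') y = a * Om e1 x y + Om e1 x' y by apply: t2.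
have wr a x y y' : Om e1 x (a *: y + y') = a * Om e1 x y + Om e1 x y' by apply: t3.
have walt x : Om e1 x x = 0 by case: (Halt e1 x x).
have wI u v : u \in U0 -> v \in U0 -> Om e1 (u *m I) v = Om e1 u (v *m I).
  move=> /U0E hu /U0E hv; apply: oppr_inj.
  by rewrite -Hiii // (sk23 Htri Halt (e1 *m I)) Hiii // opprK (sk23 Htri Halt e1 v).
have U0I u : u \in U0 -> u *m I \in U0.
  by rewrite !memU0 -mulmxA HIs mulmxA => /eqP ->; rewrite mul0mx.
have e1nz : e1 *m sigma != 0.
  rewrite he1; apply/negP => /eqP /matrixP /(_ 0 0); rewrite !mxE /=.
  by move/eqP; rewrite oner_eq0.
have hnd u : u \in U0 -> (forall v, v \in U0 -> Om e1 u v = 0) -> u = 0.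
  move=> hu hor; apply: (Hii e1 e1nz u (U0E _ hu)) => v2 hv2; apply: hor.
  by rewrite memU0 hv2.
have [s [s1 s2 s3]] := darboux HI wl wr walt wI U0I (ltnSn (\dim U0)) (subvv U0) U0I hnd.
have linO y : linf (Om e1 y) by move=> a x x'; apply: t3.
have linO2 : linf (Om e1 e2) by move=> a x x'; apply: t3.
have Oz y : Om e1 y 0 = 0 by apply: linf0.
exists (size s).
pose vec := fun l : lbl (size s) => match l with inl b => if b then e2 else e1
  | inr kt => blk I (nth (0, 0) s kt.1) kt.2 end.
pose nu := colF (fun x => Om e1 e2 (P x)).
pose dual := fun l : lbl (size s) => match l with inl b => if b then eps2 else eps1
  | inr kt => sg kt.2 *: colF (fun x => Om e1 (blk I (nth (0, 0) s kt.1) (pd kt.2)) (P x)) end.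
have vecU0 kt : vec (inr kt) \in U0 by apply: s1.
have evdV kt x : ev (dual (inr kt)) x = sg kt.2 * Om e1 (blk I (nth (0, 0) s kt.1) (pd kt.2)) (P x).
  by rewrite /dual ev_fZ ev_colF //; apply: linPf.
have hdual l l' : ev (dual l') (vec l) = (l == l')%:R.
  case: l' => [b'|[k' t']]; case: l => [b|[k t]].
  - by case: b; case: b' => /=; rewrite ?e11 ?e12 ?e21 ?e22.
  - by case: b' => /=; rewrite ?(eps1U _ (vecU0 (k, t))) ?(eps2U _ (vecU0 (k, t))).
  - by rewrite evdV; case: b => /=; rewrite ?Pe1 ?Pe2 Oz mulr0.
  - rewrite evdV PU0id // s3 //=.
    have -> : (inr (k, t) == inr (k', t') :> lbl (size s)) = ((k, t) == (k', t')) by [].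
    rewrite xpair_eqE (eq_sym k).
    case: (eqVneq k' k) => [->|ne]; last first.
      have ne' : (k' == k :> nat) = false by apply/negbTE.
      by rewrite ne' /= mul0r mulr0.
    rewrite !eqxx /=.
    by case: t => [[|[|[|[|t]]]] ht] //; case: t' => [[|[|[|[|t']]]] ht'] //;
      rewrite /sg /pd /c1 /= ?mulr1n ?mulr0n ?mulr1 ?mulr0 ?mul1r ?mulrNN ?mulr1.
set X := [seq vec l | l : lbl (size s)].
have XE : X = map vec (enum {: lbl (size s)}) by [].
set Vg := [seq vec (inr p) | p : 'I_(size s) * 'I_4].
have VgE : Vg = map (fun p => vec (inr p)) (enum {: 'I_(size s) * 'I_4}) by [].
have bl_in_Vg z : z \in bl I s -> z \in Vg.
  case/flatten_mapP => pr hpr hz.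
  have hk : (index pr s < size s)%N by rewrite index_mem.
  have epr : nth (0, 0) s (Ordinal hk) = pr by rewrite /= nth_index.
  rewrite VgE; apply/mapP.
  move: hz; rewrite !inE => /or4P [] /eqP ->.
  - by exists (Ordinal hk, @Ordinal 4 0 isT); rewrite ?mem_enum // /vec /blk /= epr.
  - by exists (Ordinal hk, @Ordinal 4 1 isT); rewrite ?mem_enum // /vec /blk /= epr.
  - by exists (Ordinal hk, @Ordinal 4 2 isT); rewrite ?mem_enum // /vec /blk /= epr.
  - by exists (Ordinal hk, @Ordinal 4 3 isT); rewrite ?mem_enum // /vec /blk /= epr.
have Vg_in_X z : z \in Vg -> z \in X.
  rewrite VgE XE => /mapP [pp _ ->]; apply/mapP; exists (inr pp) => //; by rewrite mem_enum.
have U0Vg : (U0 <= <<Vg>>)%VS.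
  apply: (subv_trans s2); apply/span_subvP => z hz; apply: memv_span; exact: bl_in_Vg.
have VgU0 : (<<Vg>> <= U0)%VS.
  by apply/span_subvP => z; rewrite VgE => /mapP [pp _ ->].
have e1X : e1 \in X by rewrite XE; apply/mapP; exists lE1; rewrite ?mem_enum.
have e2X : e2 \in X by rewrite XE; apply/mapP; exists lE2; rewrite ?mem_enum.
have fullX : (fullv <= <<X>>)%VS.
  apply/subvP => x _.
  have -> : x = (ev eps1 x *: e1 + ev eps2 x *: e2) + P x by rewrite /P addrC subrK.
  have sVX : (<<Vg>> <= <<X>>)%VS.
    by apply/span_subvP => z hz; apply: memv_span; apply: Vg_in_X.
  apply: rpredD; first by rewrite rpredD // rpredZ // memv_span.
  apply: (subvP sVX); apply: (subvP U0Vg); exact: PU0.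
have freeX : free X.
  by rewrite XE; apply: (free_of_duals lE1) => //; exact: enum_uniq.
have sizeX : size X = m.
  have dimf : \dim (fullv : {vspace 'rV[R]_m}) = m by rewrite dimvf /dim /= mul1n.
  apply/eqP; rewrite eqn_leq; apply/andP; split.
  - by rewrite -(eqP freeX); move: (dimvS (subvf <<X>>)); rewrite dimf.
  - by move: (leq_trans (dimvS fullX) (dim_span X)); rewrite dimf.
have cardL : size X = (2 + size s * 4)%N.
  by rewrite XE size_map -cardE card_sum card_bool card_prod !card_ord.
split.
  have hm : m = (2 + size s * 4)%N by rewrite -cardL sizeX.
  have aux : forall mm kk : nat, mm = (2 + kk * 4)%N -> (mm - 2 = 4 * kk)%N.
    by move=> mm kk ->; rewrite addKn mulnC.
  by rewrite mxrank_ker (eqP Hfull); apply: aux.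
exists vec, dual, nu.
have nue : forall x, ev nu x = Om e1 e2 (P x) by move=> x; rewrite ev_colF //; apply: linPf.
split; split.
- rewrite basisEfree freeX subvf /=.
  by rewrite dimvf /dim /= mul1n sizeX.
- exact: hdual.
- pose d2 := fun b : bool => if b then q^-1 *: col 1 (1%:M : 'M[R]_2)
     else col 0 (1%:M : 'M[R]_2) - (p / q) *: col 1 (1%:M : 'M[R]_2).
  pose v2 := fun b : bool => if b then e2 *m sigma else e1 *m sigma.
  have -> : [:: vec lE1 *m sigma; vec lE2 *m sigma] = map v2 [:: false; true] by [].
  rewrite basisEfree (free_of_duals false (dual := d2)) ?subvf //=.
    by rewrite dimvf /dim /= mul1n.
  move=> l l'; rewrite !inE => /orP [] /eqP -> /orP [] /eqP ->;
    rewrite /d2 /v2 /= ?ev_fB ?ev_fZ !ev_col !mulmx1 ?he1 ?he2 !mxE /= -/p -/q.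
  + by rewrite mulr0 subr0.
  + by rewrite mulr0.
  + by rewrite divfK // subrr.
  + by rewrite mulVf.
- move=> x; apply/idP/idP => h.
  + by rewrite -memU0; apply: (subvP VgU0).
  + by apply: (subvP U0Vg); rewrite memU0.
split.
- by [].
- by move=> k; rewrite /vec /blk /= opprK.
- by rewrite !nue /= Pe1 Pe2 !(linf0 linO2).
pose RHS := fun x y z => \sum_(k < size s)
                  (  wedge3 (dual (lB1 k)) (dual (lA1 k)) (dual lE2) x y z
                   + wedge3 (dual (lB2 k)) (dual (lA2 k)) (dual lE2) x y z
                   - (  wedge3 (dual (lB1 k)) (dual (lA2 k)) (dual lE1) x y z
                      - wedge3 (dual (lB2 k)) (dual (lA1 k)) (dual lE1) x y z))
               + wedge3 nu (dual lE1) (dual lE2) x y z.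
suff hz : forall x y z, Om x y z - RHS x y z = 0.
  by move=> x y z; apply/eqP; rewrite -subr_eq0; apply/eqP; exact: (hz x y z).
have triR : trilinear RHS.
  apply: tri_add; last exact: tri_wedge3.
  apply: tri_sum => k; apply: tri_sub; first (apply: tri_add; exact: tri_wedge3).
  by apply: tri_sub; exact: tri_wedge3.
have altR : alternating3 RHS.
  apply: alt_add; last exact: alt_wedge3.
  apply: alt_sum => k; apply: alt_sub; first (apply: alt_add; exact: alt_wedge3).
  by apply: alt_sub; exact: alt_wedge3.
have triH := tri_sub Htri triR.
have span2 (F : 'rV[R]_m -> 'rV[R]_m -> R) : (forall v, linf (F v)) ->
    (forall w, linf (fun v => F v w)) ->
    (forall pp pp', F (vec (inr pp)) (vec (inr pp')) = 0) ->
    forall v w, v \in U0 -> w \in U0 -> F v w = 0.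
  move=> l2 l1 hg v w hv hw.
  apply: (lin_span0 (X := Vg)) => //; last exact: (subvP U0Vg).
  move=> g'; rewrite VgE => /mapP [pp' _ ->].
  apply: (lin_span0 (F := fun v => F v (vec (inr pp'))) (X := Vg)) => //; last exact: (subvP U0Vg).
  move=> g; rewrite VgE => /mapP [pp _ ->]; exact: hg.
have [tH1 tH2 tH3] := triH.
have eqii (a b : 'I_(size s) * 'I_4) : (inr a == inr b :> lbl (size s)) = (a == b) by [].
have eqil (a : 'I_(size s) * 'I_4) b : (inr a == inl b :> lbl (size s)) = false by [].
have eqli (a : 'I_(size s) * 'I_4) b : (inl b == inr a :> lbl (size s)) = false by [].
have eqll b b' : (inl b == inl b' :> lbl (size s)) = (b == b') by [].
have genE1 ka ta kb tb : RHS e1 (vec (inr (ka, ta))) (vec (inr (kb, tb))) = (ka == kb)%:R * c1 ta tb.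
  rewrite /RHS (bigD1 ka) // big1 ?addr0; last first.
    move=> k hk; rewrite /wedge3 -[e1]/(vec lE1) !hdual /lB1 /lB2 /lA1 /lA2 !eqii !eqil !eqli !eqll !xpair_eqE.
    by rewrite (eq_sym ka) (negbTE hk) /=; ring.
  rewrite /wedge3 -[e1]/(vec lE1) !hdual /lB1 /lB2 /lA1 /lA2 !eqii !eqil !eqli !eqll !xpair_eqE eqxx /=.
  case: (eqVneq kb ka) => [->|ne]; last first.
    have ne1 : (kb == ka :> nat) = false by apply/negbTE.
    have ne2 : (ka == kb :> nat) = false by rewrite eq_sym.
    by rewrite ?ne1 ?ne2 ?(negbTE ne) 1?eq_sym ?(negbTE ne) /=; ring.
  rewrite ?eqxx /=.
  by case: ta => [[|[|[|[|ta]]]] hta] //; case: tb => [[|[|[|[|tb]]]] htb] //; rewrite /c1 /=; ring.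
have genE2 ka ta kb tb : RHS e2 (vec (inr (ka, ta))) (vec (inr (kb, tb))) = (ka == kb :> nat)%:R * c2 ta tb.
  rewrite /RHS (bigD1 ka) // big1 ?addr0; last first.
    move=> k hk; rewrite /wedge3 -[e2]/(vec lE2) !hdual /lB1 /lB2 /lA1 /lA2 !eqii !eqil !eqli !eqll !xpair_eqE.
    by rewrite (eq_sym ka) (negbTE hk) /=; ring.
  rewrite /wedge3 -[e2]/(vec lE2) !hdual /lB1 /lB2 /lA1 /lA2 !eqii !eqil !eqli !eqll !xpair_eqE eqxx /=.
  case: (eqVneq kb ka) => [->|ne]; last first.
    have ne1 : (kb == ka :> nat) = false by apply/negbTE.
    have ne2 : (ka == kb :> nat) = false by rewrite eq_sym.
    by rewrite ?ne1 ?ne2 ?(negbTE ne) 1?eq_sym ?(negbTE ne) /=; ring.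
  rewrite ?eqxx /=.
  by case: ta => [[|[|[|[|ta]]]] hta] //; case: tb => [[|[|[|[|tb]]]] htb] //; rewrite /c2 /=; ring.
apply: (tri_zero triH (alt_sub Halt altR) (e1 := e1) (e2 := e2) (V := U0)).
- move=> x; exists (ev eps1 x), (ev eps2 x), (P x); split; first exact: PU0.
  by rewrite /P addrC subrK.
- move=> u v w hu hv hw; rewrite Hi ?U0E //.
  have z1u : ev (dual lE1) u = 0 := eps1U _ hu.
  have z1v : ev (dual lE1) v = 0 := eps1U _ hv.
  have z1w : ev (dual lE1) w = 0 := eps1U _ hw.
  have z2u : ev (dual lE2) u = 0 := eps2U _ hu.
  have z2v : ev (dual lE2) v = 0 := eps2U _ hv.
  have z2w : ev (dual lE2) w = 0 := eps2U _ hw.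
  rewrite /RHS /wedge3 z1u z1v z1w z2u z2v z2w big1 => [|k _]; ring.
- apply: span2.
  + by move=> v a w w'; rewrite tH3.
  + by move=> w a v v'; rewrite tH2.
  case=> ka ta [kb tb]; apply/eqP; rewrite subr_eq0; apply/eqP.
  rewrite genE1 s3 //.
- have ONeg y x : Om e1 y (- x) = - Om e1 y x.
    by have := linO y (-1) x 0; rewrite addr0 Oz addr0 scaleN1r mulN1r.
  apply: span2.
  + by move=> v a w w'; rewrite tH3.
  + by move=> w a v v'; rewrite tH2.
  case=> ka ta [kb tb]; apply/eqP; rewrite subr_eq0; apply/eqP.
  rewrite genE2 /e2 (Hiii _ _ _ (U0E _ (vecU0 _)) (U0E _ (vecU0 _))).
  case: tb => [[|[|[|[|tb]]]] htb] //.
  + have -> : vec (inr (kb, Ordinal htb)) *m I = vec (inr (kb, @Ordinal 4 1 isT)) by [].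
    rewrite s3 //; case: ta => [[|[|[|[|ta]]]] hta] //; rewrite /c1 /c2 /=; ring.
  + have -> : vec (inr (kb, Ordinal htb)) *m I = - vec (inr (kb, @Ordinal 4 0 isT)).
      by rewrite /vec /blk /= -mulmxA HI mulmxN mulmx1.
    rewrite ONeg s3 //; case: ta => [[|[|[|[|ta]]]] hta] //; rewrite /c1 /c2 /=; ring.
  + have -> : vec (inr (kb, Ordinal htb)) *m I = - vec (inr (kb, @Ordinal 4 3 isT)).
      by rewrite /vec /blk /= opprK.
    rewrite ONeg s3 //; case: ta => [[|[|[|[|ta]]]] hta] //; rewrite /c1 /c2 /=; ring.
  + have -> : vec (inr (kb, Ordinal htb)) *m I = vec (inr (kb, @Ordinal 4 2 isT)).
      by rewrite /vec /blk /= mulNmx -mulmxA HI mulmxN mulmx1 opprK.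
    rewrite s3 //; case: ta => [[|[|[|[|ta]]]] hta] //; rewrite /c1 /c2 /=; ring.
- move=> v hv.
  have d1 pp : ev (dual (inr pp)) e1 = 0 by rewrite -[e1]/(vec lE1) hdual eqli.
  have d2 pp : ev (dual (inr pp)) e2 = 0 by rewrite -[e2]/(vec lE2) hdual eqli.
  have f11 : ev (dual lE1) e1 = 1 := e11.
  have f21 : ev (dual lE2) e1 = 0 := e21.
  have f12 : ev (dual lE1) e2 = 0 := e12.
  have f22 : ev (dual lE2) e2 = 1 := e22.
  have fv1 : ev (dual lE1) v = 0 := eps1U _ hv.
  have fv2 : ev (dual lE2) v = 0 := eps2U _ hv.
  have n1 : ev nu e1 = 0 by rewrite nue Pe1 (linf0 linO2).
  have n2 : ev nu e2 = 0 by rewrite nue Pe2 (linf0 linO2).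
  have nv : ev nu v = Om e1 e2 v by rewrite nue PU0id.
  rewrite /RHS big1 ?add0r => [|k _]; last by rewrite /wedge3 !d1 !d2; ring.
  rewrite /wedge3 f11 f21 f12 f22 fv1 fv2 n1 n2 nv; ring.
Qed.
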